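(* If $L\subseteq\Sigma^\omega$ is RPBA-recognizable, then there are finitely many Parikh-recognizable languages $U_1,\dots,U_n\subseteq\Sigma^*$ and regular languages $V_1,\dots,V_n\subseteq\Sigma^*$ with $L=\bigcup_{i=1}^nU_iV_i^\omega$.
   Context: For $V\subseteq\Sigma^*$, $V^\omega=\{w_1w_2\cdots\mid w_i\in V\setminus\{\varepsilon\}\}$. A semi-linear set in $\mathbb{N}^d$ is a finite union of sets $\{b_0+\sum_{j=1}^\ell b_jz_j\mid z_j\in\mathbb{N}\}$ with $b_j\in\mathbb{N}^d$. A Parikh automaton (PA) of dimension $d$ is $(Q,\Sigma,q_0,\Delta,F,C)$ with finite $Q$, $q_0\in Q$, $F\subseteq Q$, finite $\Delta\subseteq Q\times\Sigma\times\mathbb{N}^d\times Q$, semi-linear $C\subseteq\mathbb{N}^d$; it accepts a finite word $x_1\cdots x_n$ if there is a run $r_i=(p_{i-1},x_i,\mathbf{v}_i,p_i)\in\Delta$, $p_0=q_0$, with $p_n\in F$ and $\sum_i\mathbf{v}_i\in C$; Parikh-recognizable languages are those accepted by PA. A reachability Parikh–Büchi automaton (RPBA) is a PA read on infinite words: a run $r_1r_2\cdots$ ($r_i=(p_{i-1},\alpha_i,\mathbf{v}_i,p_i)\in\Delta$, $p_0=q_0$) is accepting if there is $i\ge1$ with $p_i\in F$ and $\sum_{k\le i}\mathbf{v}_k\in C$, and there are infinitely many $j$ with $p_j\in F$. $L$ is RPBA-recognizable if it is the set of infinite words with an accepting run of some RPBA. *)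

(* Defs.v *)
From Stdlib Require List.
From mathcomp Require Import all_boot.
Set Implicit Arguments. Unset Strict Implicit. Unset Printing Implicit Defensive.

Definition vec (d : nat) := 'I_d -> nat.

Record linset (d : nat) := Linset { lbase : vec d; lperiods : seq (vec d) }.

Definition in_linset d (l : linset d) (v : vec d) : Prop :=
  exists z : nat -> nat, forall k : 'I_d,
    v k = lbase l k + \sum_(j < size (lperiods l)) z j * nth (fun _ => 0) (lperiods l) j k.

Definition semilinear (d : nat) := seq (linset d).

Definition in_semilinear d (C : semilinear d) (v : vec d) : Prop :=
  exists l, List.In l C /\ in_linset l v.

Record PA (Sigma : finType) (d : nat) := MkPA {
  pa_Q : finType;
  pa_q0 : pa_Q;
  pa_Delta : seq (pa_Q * Sigma * vec d * pa_Q);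
  pa_F : pred pa_Q;
  pa_C : semilinear d }.
Arguments pa_Q {Sigma d} p.
Arguments pa_q0 {Sigma d} p.
Arguments pa_Delta {Sigma d} p.
Arguments pa_F {Sigma d} p.
Arguments pa_C {Sigma d} p.

Definition vsum d (vs : nat -> vec d) (n : nat) : vec d :=
  fun k => \sum_(i < n) vs i k.

(* Acceptance of a finite word x_1 ... x_n (0-indexed here): states p 0 .. p n,
   transition i is (p i, x_i, vs i, p (i+1)). *)
Definition PA_accepts Sigma d (A : PA Sigma d) (w : seq Sigma) : Prop :=
  exists (p : nat -> pa_Q A) (vs : nat -> vec d),
    p 0 = pa_q0 A /\
    (forall i x, onth w i = Some x -> List.In (p i, x, vs i, p i.+1) (pa_Delta A)) /\
    pa_F A (p (size w)) /\
    in_semilinear (pa_C A) (vsum vs (size w)).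

Definition Parikh_recognizable (Sigma : finType) (U : seq Sigma -> Prop) : Prop :=
  exists d (A : PA Sigma d), forall w, U w <-> PA_accepts A w.

(* Transition r_{i+1} = (p i, alpha i, vs i, p (i+1)); sum_{k <= i} v_k of the paper
   is vsum vs i here (sum of the first i transitions), reached in state p i. *)
Definition RPBA_accepts Sigma d (A : PA Sigma d) (alpha : nat -> Sigma) : Prop :=
  exists (p : nat -> pa_Q A) (vs : nat -> vec d),
    p 0 = pa_q0 A /\
    (forall i, List.In (p i, alpha i, vs i, p i.+1) (pa_Delta A)) /\
    (exists i, 1 <= i /\ pa_F A (p i) /\ in_semilinear (pa_C A) (vsum vs i)) /\
    (forall m, exists j, m < j /\ pa_F A (p j)).

Definition RPBA_recognizable (Sigma : finType) (L : (nat -> Sigma) -> Prop) : Prop :=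
  exists d (A : PA Sigma d), forall alpha, L alpha <-> RPBA_accepts A alpha.

Record DFA (Sigma : finType) := MkDFA {
  dfa_Q : finType;
  dfa_q0 : dfa_Q;
  dfa_delta : dfa_Q -> Sigma -> dfa_Q;
  dfa_F : pred dfa_Q }.
Arguments dfa_Q {Sigma} d.
Arguments dfa_q0 {Sigma} d.
Arguments dfa_delta {Sigma} d.
Arguments dfa_F {Sigma} d.

Definition DFA_accepts Sigma (A : DFA Sigma) (w : seq Sigma) : bool :=
  dfa_F A (foldl (dfa_delta A) (dfa_q0 A) w).

Definition regular (Sigma : finType) (V : seq Sigma -> Prop) : Prop :=
  exists A : DFA Sigma, forall w, V w <-> DFA_accepts A w.

(* V^omega = { w_1 w_2 ... | w_i in V \ {eps} }:  beta is the infinite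
   concatenation of ws 0, ws 1, ... iff every finite concatenation is a prefix. *)
Definition omega_lang (Sigma : finType) (V : seq Sigma -> Prop) (beta : nat -> Sigma) : Prop :=
  exists ws : nat -> seq Sigma,
    (forall i, V (ws i) /\ ws i <> [::]) /\
    (forall n, let pre := flatten (map ws (iota 0 n)) in
       pre = map beta (iota 0 (size pre))).

Definition concat_lang (Sigma : finType) (U : seq Sigma -> Prop)
    (W : (nat -> Sigma) -> Prop) (alpha : nat -> Sigma) : Prop :=
  exists u beta, U u /\ W beta /\
    (forall k, alpha k = if k < size u then nth (beta 0) u k else beta (k - size u)).

(* Main.v *)
Require Import Defs.
From mathcomp Require Import all_boot.
From Stdlib Require Import Setoid ClassicalEpsilon Classical FunctionalExtensionality.
From mathcomp Require Import zify.
Set Implicit Arguments. Unset Strict Implicit. Unset Printing Implicit Defensive.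

Lemma fchoice (X Y : Type) (P : X -> Y -> Prop) :
  (forall a, exists b, P a b) -> exists f, forall a, P a (f a).
Proof.
move=> H. exists (fun a => proj1_sig (constructive_indefinite_description _ (H a))).
move=> a; exact: (proj2_sig (constructive_indefinite_description _ (H a))).
Qed.

Lemma In_cat (T : Type) (x : T) s1 s2 :
  List.In x (s1 ++ s2) <-> List.In x s1 \/ List.In x s2.
Proof. elim: s1 => [|y s1 IH] /=; [tauto | rewrite IH; tauto]. Qed.

Lemma In_flatten_map (T U : Type) (f : T -> seq U) s y :
  List.In y (flatten (map f s)) <-> exists t, List.In t s /\ List.In y (f t).
Proof.
elim: s => [|t s IH] /=; first by split=> [[]|[? []]].
rewrite In_cat IH.
split=> [[H|[t' [H1 H2]]]|[t' [[<-|H1] H2]]].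
- by exists t; auto.
- by exists t'; auto.
- by left.
- by right; exists t'.
Qed.

Lemma onth_some (T : Type) (s : seq T) k x :
  onth s k = Some x -> k < size s /\ forall x0, nth x0 s k = x.
Proof.
move=> H; split; last by move=> x0; exact: onth_nth.
by rewrite -onthTE H.
Qed.

Lemma onth_lt (T : Type) (s : seq T) k x0 :
  k < size s -> onth s k = Some (nth x0 s k).
Proof.
elim: s k => [|y s IH] [|k] //= Hk. exact: IH.
Qed.

Lemma vsum_cut d (vs vs' : nat -> vec d) i n : i <= n ->
  (forall k, k < i -> vs' k = vs k) -> (forall k, i <= k -> k < n -> vs' k = (fun _ => 0)) ->
  vsum vs' n = vsum vs i.
Proof.
move=> Hin H1 H2; apply: functional_extensionality => c; rewrite /vsum.
rewrite -(subnKC Hin) big_split_ord /=.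
rewrite [X in _ + X]big1 ?addn0; last first.
  move=> j _; have Hj := ltn_ord j; rewrite H2 //=; lia.
apply: eq_bigr => j _; rewrite H1 //.
Qed.

Fixpoint blk (st : nat -> nat) (m : nat) : nat :=
  if m is m'.+1 then (if m < st (blk st m').+1 then blk st m' else (blk st m').+1) else 0.

Lemma blkS st m : blk st m.+1 = if m.+1 < st (blk st m).+1 then blk st m else (blk st m).+1.
Proof. by []. Qed.

Section Blk.
Variable st : nat -> nat.
Hypothesis st0 : st 0 = 0.
Hypothesis stS : forall k, st k < st k.+1.

Lemma st_mono a b : a <= b -> st a <= st b.
Proof.
move=> Hab; rewrite -(subnKC Hab); elim: (b - a) => [|n IH]; first by rewrite addn0.
rewrite addnS; apply: leq_trans IH _; exact: ltnW.
Qed.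

Lemma blk_spec m : st (blk st m) <= m < st (blk st m).+1.
Proof.
elim: m => [|m IH]; first by rewrite /= st0 /=; have := stS 0; rewrite st0.
rewrite blkS; set b := blk st m; move: IH; rewrite -/b => IH.
have := stS b.+1.
case: ifP => H; lia.
Qed.

Lemma blk_uniq m k : st k <= m < st k.+1 -> blk st m = k.
Proof.
move=> Hk; have Hb := blk_spec m.
case: (ltngtP (blk st m) k) => // H.
- have := st_mono H; lia.
- have := st_mono H; lia.
Qed.
End Blk.
Section Auto.
Variables (Sigma : finType) (d : nat) (A : PA Sigma d).
Local Notation Q := (pa_Q A).

Definition step (q : Q) (a : Sigma) (q' : Q) := exists v, List.In (q, a, v, q') (pa_Delta A).

Fixpoint reach (q : Q) (w : seq Sigma) (q' : Q) : Prop :=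
  match w with [::] => q = q' | a :: w => exists m, step q a m /\ reach m w q' end.

Definition stepb (q : Q) (a : Sigma) (q' : Q) : bool :=
  has (fun t : Q * Sigma * vec d * Q => [&& t.1.1.1 == q, t.1.1.2 == a & t.2 == q']) (pa_Delta A).

Lemma stepbP q a q' : stepb q a q' <-> step q a q'.
Proof.
rewrite /stepb /step; elim: (pa_Delta A) => [|[[[p b] v] p'] s IH] /=.
  by split=> //; case=> ? [].
split.
  case/orP.
    by case/and3P => /eqP-> /eqP-> /eqP->; exists v; left.
  by move/IH => [v' H]; exists v'; right.
case=> v' [E|H].
  by case: E => -> -> _ ->; rewrite !eqxx.
by apply/orP; right; apply/IH; exists v'.
Qed.

Definition ddelta (S : {set Q}) (a : Sigma) : {set Q} := [set q' | [exists q in S, stepb q a q']].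

Definition Df (f : Q) : DFA Sigma := MkDFA [set f] ddelta (fun S => f \in S).

Lemma foldl_reach S w q' : q' \in foldl ddelta S w <-> exists q, q \in S /\ reach q w q'.
Proof.
elim: w S => [|a w IH] S /=.
  by split; [exists q' | case=> q [H <-]].
rewrite IH; split.
  case=> m [Hm Hr]; move: Hm; rewrite inE => /existsP [q /andP [Hq /stepbP Hs]].
  by exists q; split=> //; exists m.
case=> q [Hq [m [Hs Hr]]]; exists m; split=> //.
by rewrite inE; apply/existsP; exists q; rewrite Hq; apply/stepbP.
Qed.

Lemma Df_acc f w : DFA_accepts (Df f) w <-> reach f w f.
Proof.
rewrite /DFA_accepts /= foldl_reach; split.
  by case=> q []; rewrite inE => /eqP ->.
by move=> H; exists f; rewrite inE eqxx.
Qed.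

Lemma reach_path x0 q w q' : reach q w q' -> exists rho : nat -> Q,
  rho 0 = q /\ rho (size w) = q' /\ forall j, j < size w -> step (rho j) (nth x0 w j) (rho j.+1).
Proof.
elim: w q => [|a w IH] q /=.
  by move=> ->; exists (fun _ => q').
case=> m [Hs /IH [rho [H0 [Hn Hj]]]].
exists (fun j => if j is j'.+1 then rho j' else q); split=> //; split=> //.
by case=> [_|j Hj']; [rewrite H0 | exact: Hj].
Qed.

Lemma run_reach (p : nat -> Q) (al : nat -> Sigma) :
  (forall i, step (p i) (al i) (p i.+1)) ->
  forall n a, reach (p a) (map al (iota a n)) (p (a + n)).
Proof.
move=> H; elim=> [|n IH] a /=; first by rewrite addn0.
exists (p a.+1); split=> //; rewrite -addSnnS; exact: IH.
Qed.

Definition trs (t : Q * Sigma * vec d * Q) : seq ((Q * bool) * Sigma * vec d * (Q * bool)) :=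
  let: (p, a, v, p') := t in
  [:: ((p, false), a, v, (p', false)); ((p, true), a, (fun _ => 0), (p', true))] ++
  (if pa_F A p' then [:: ((p, false), a, v, (p', true))] else [::]).

Definition Dl' := flatten (map trs (pa_Delta A)).

Definition Af (f : Q) : PA Sigma d :=
  MkPA (pa_q0 A, false) Dl' (fun s : Q * bool => [&& s.1 == f, s.2 & pa_F A f]) (pa_C A).

Lemma Af_inv s a v s' : List.In (s, a, v, s') Dl' ->
  [\/ [/\ s.2 = false, s'.2 = false & List.In (s.1, a, v, s'.1) (pa_Delta A)],
      [/\ s.2 = false, s'.2 = true, pa_F A s'.1 & List.In (s.1, a, v, s'.1) (pa_Delta A)] |
      [/\ s.2 = true, s'.2 = true, v = (fun _ => 0) & step s.1 a s'.1]].
Proof.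
case/In_flatten_map => [[[[p b] v0] p']] [Hin]; rewrite /trs In_cat /=.
case=> [[E|[E|[]]]|].
- by case: E => <- <- <- <-; constructor 1.
- by case: E => <- <- <- <-; constructor 3; split=> //; exists v0.
- case Hf: (pa_F A p') => /=; last by [].
  case=> [E|[]].
  by case: E => <- <- <- <-; constructor 2.
Qed.

Lemma Af_ff p a v p' : List.In (p, a, v, p') (pa_Delta A) -> List.In ((p, false), a, v, (p', false)) Dl'.
Proof. by move=> H; apply/In_flatten_map; exists (p, a, v, p'); split=> //=; left. Qed.
Lemma Af_tt p a v p' : List.In (p, a, v, p') (pa_Delta A) -> List.In ((p, true), a, (fun _ => 0), (p', true)) Dl'.
Proof. by move=> H; apply/In_flatten_map; exists (p, a, v, p'); split=> //=; right; left. Qed.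
Lemma Af_ft p a v p' : pa_F A p' -> List.In (p, a, v, p') (pa_Delta A) -> List.In ((p, false), a, v, (p', true)) Dl'.
Proof.
move=> Hf H; apply/In_flatten_map; exists (p, a, v, p'); split=> //=.
by right; right; rewrite Hf; left.
Qed.

Lemma dir1 al : RPBA_accepts A al ->
  exists f, concat_lang (PA_accepts (Af f)) (omega_lang (fun w => DFA_accepts (Df f) w)) al.
Proof.
case=> p [vs [H0 [Htr [[i [Hi1 [HFi HCi]]] Hinf]]]].
have Hst : forall k, step (p k) (al k) (p k.+1) by move=> k; exists (vs k).
have [f [Hf Hfinf]] : exists f, pa_F A f /\ forall m, exists j, m < j /\ p j = f.
  apply: NNPP => Hn.
  have H1 : forall f : Q, exists m, forall j, m < j -> pa_F A f -> p j <> f.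
    move=> f; apply: NNPP => H2; apply: Hn; exists f.
    have H3 : forall m, exists j, m < j /\ pa_F A f /\ p j = f.
      move=> m; apply: NNPP => H4; apply: H2; exists m => j Hj HF Hpj.
      by apply: H4; exists j.
    split; first by have [j [_ [? _]]] := H3 0.
    by move=> m; have [j [? [_ ?]]] := H3 m; exists j.
  have [M HM] := fchoice H1.
  have [j [Hj HFj]] := Hinf (\max_(f : Q) M f).
  apply: (HM (p j) j) => //.
  exact: leq_ltn_trans (leq_bigmax (p j)) Hj.
have [g Hg] := fchoice Hfinf.
pose J k := iter k.+1 g i.
have HJS : forall k, J k.+1 = g (J k) by [].
have HJ0 : J 0 = g i by [].
have HJf : forall k, p (J k) = f by move=> k; rewrite /J iterS; case: (Hg (iter k g i)).
have HJlt : forall k, J k < J k.+1 by move=> k; rewrite HJS; case: (Hg (J k)).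
have HJge : forall k, g i <= J k.
  elim=> [|k IH]; first by rewrite HJ0.
  exact: leq_trans IH (ltnW (HJlt k)).
have Hig : i < g i by case: (Hg i).
pose J0 := g i.
pose u := map al (iota 0 J0).
pose ws k := map al (iota (J k) (J k.+1 - J k)).
pose be m := al (J0 + m).
have Hsu : size u = J0 by rewrite size_map size_iota.
exists f, u, be; split; [|split].
- exists (fun k => (p k, i <= k)), (fun k => if k < i then vs k else (fun _ => 0)).
  split; first by rewrite /= H0; have -> : i <= 0 = false by lia.
  split.
    move=> k x Hkx; have [Hk Hx] := onth_some Hkx; rewrite Hsu in Hk.
    have -> : x = al k by rewrite -(Hx x) (nth_map 0) ?size_iota // nth_iota.
    rewrite /=.
    case: (ltngtP k.+1 i) => Hki.
    + have E1 : (i <= k) = false by lia.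
      have E2 : (i <= k.+1) = false by lia.
      have E3 : (k < i) = true by lia.
      rewrite ?E1 ?E2 ?E3; exact: Af_ff.
    + have E1 : (i <= k) = true by lia.
      have E2 : (i <= k.+1) = true by lia.
      have E3 : (k < i) = false by lia.
      rewrite ?E1 ?E2 ?E3; exact: Af_tt (Htr k).
    + have E1 : (i <= k) = false by lia.
      have E2 : (i <= k.+1) = true by lia.
      have E3 : (k < i) = true by lia.
      rewrite ?E1 ?E2 ?E3.
      by apply: Af_ft; [rewrite Hki | exact: Htr].
  split.
    have := HJf 0; rewrite HJ0 => HJf0.
    by rewrite Hsu /= /J0 HJf0 eqxx Hf (ltnW Hig).
  rewrite Hsu (@vsum_cut d vs _ i) //.
  + exact: ltnW.
  + by move=> k ->.
  + by move=> k Hk _; rewrite ltnNge Hk.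
- exists ws; split.
    move=> k; split.
      apply/Df_acc.
      have := run_reach Hst (J k.+1 - J k) (J k).
      by rewrite subnKC ?HJf // ltnW.
    rewrite /ws; have := HJlt k => Hlt.
    case E: (J k.+1 - J k) => [|n] //=; lia.
  move=> n /=.
  have -> : flatten (map ws (iota 0 n)) = map al (iota J0 (J n - J0)).
    elim: n => [|n IH]; first by rewrite HJ0 subnn.
    rewrite -addn1 iotaD map_cat flatten_cat IH /= cats0 add0n /ws -map_cat.
    rewrite -{2}[J n](subnKC (HJge n)) -iotaD.
    congr (map al (iota J0 _)).
    have := HJlt n; have := HJge n; rewrite addn1; lia.
  rewrite size_map size_iota -[X in iota X]addn0 iotaDl -map_comp.
  by apply: eq_map.
- move=> k; rewrite Hsu; case: ifP => Hk.
    by rewrite (nth_map 0) ?size_iota // nth_iota.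
  rewrite /be subnKC //; lia.
Qed.

Lemma dir2 al f :
  concat_lang (PA_accepts (Af f)) (omega_lang (fun w => DFA_accepts (Df f) w)) al ->
  RPBA_accepts A al.
Proof.
case=> u [be [[p' [vs' [H0 [Htr [Hfin HC]]]]] [[ws [Hws Hpre]] Hal]]].
set N := size u.
move: Hfin; rewrite /= => /and3P [/eqP HfN HtN Hf].
have Htr' : forall k, k < N -> List.In (p' k, nth (be 0) u k, vs' k, p' k.+1) Dl'.
  by move=> k Hk; apply: Htr; apply: onth_lt.
have H02 : (p' 0).2 = false by rewrite H0.
have [i Hi Hmin] : exists2 i, (p' i).2 & forall k, (p' k).2 -> i <= k.
  case: (ex_minnP (ex_intro (fun k => (p' k).2) N HtN)) => i Hi Hm.
  by exists i.
have HiN : i <= N by exact: Hmin.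
have Hi1 : 0 < i by case: i Hi {Hmin HiN}; rewrite ?H02.
have Hpers : forall t, i + t <= N -> (p' (i + t)).2.
  elim=> [|t IH]; first by rewrite addn0.
  move=> Ht; have := Htr' (i + t) ltac:(lia).
  case/Af_inv=> [[E _ _]|[E _ _ _]|[_ E _ _]]; rewrite ?addnS //.
  - by rewrite IH in E => //; lia.
  - by rewrite IH in E => //; lia.
have Hz : forall k, i <= k -> k < N -> vs' k = (fun _ => 0).
  move=> k Hik HkN; have := Htr' k HkN.
  have Hk2 : (p' k).2 by rewrite -(subnKC Hik); apply: Hpers; lia.
  case/Af_inv=> [[E _ _]|[E _ _ _]|[_ _ E _]] //; by rewrite Hk2 in E.
pose st k := size (flatten (map ws (iota 0 k))).
have flS : forall k, flatten (map ws (iota 0 k.+1)) = flatten (map ws (iota 0 k)) ++ ws k.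
  by move=> k; rewrite -addn1 iotaD map_cat flatten_cat /= cats0.
have stS' : forall k, st k.+1 = st k + size (ws k).
  by move=> k; rewrite /st flS size_cat.
have st0 : st 0 = 0 by [].
have stS : forall k, st k < st k.+1.
  move=> k; rewrite stS'; case: (Hws k) => _; case: (ws k) => //= a w _; lia.
have Hrho : forall k, exists rho : nat -> Q, rho 0 = f /\ rho (size (ws k)) = f /\
    forall j, j < size (ws k) -> step (rho j) (nth (be 0) (ws k) j) (rho j.+1).
  move=> k; case: (Hws k) => /Df_acc H _; exact: reach_path.
have [R HR] := fchoice Hrho.
pose qb m := R (blk st m) (m - st (blk st m)).
have Hbe : forall k j, j < size (ws k) -> be (st k + j) = nth (be 0) (ws k) j.
  move=> k j Hj; have := Hpre k.+1; rewrite flS => /= E.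
  have := congr1 (fun s => nth (be 0) s (st k + j)) E; rewrite /= nth_cat ltnNge leq_addr /= addKn => ->.
  rewrite (nth_map 0) ?nth_iota //;
  by rewrite ?size_iota size_cat -/(st k) ltn_add2l.
have Hqb : forall m, step (qb m) (be m) (qb m.+1).
  move=> m; rewrite /qb blkS; set b := blk st m.
  have Hb := blk_spec st0 stS m; rewrite -/b in Hb.
  have Hsz := stS' b.
  have [Hr0 [Hrn Hrs]] := HR b.
  have Hjm : m - st b < size (ws b) by lia.
  have := Hrs _ Hjm; rewrite -Hbe // subnKC; last by lia.
  case: ifP => Hc.
    by rewrite subSn //; lia.
  have [Hr0' _] := HR b.+1.
  have -> : m.+1 - st b.+1 = 0 by lia.
  have -> : (m - st b).+1 = size (ws b) by lia.
  by rewrite Hrn Hr0'.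
have Hqb0 : qb 0 = f by rewrite /qb /= st0; case: (HR 0).
pose P k := if k < N then (p' k).1 else qb (k - N).
have HP : forall k, k <= N -> P k = (p' k).1.
  move=> k Hk; rewrite /P; case: ifP => // Hc.
  have -> : k = N by lia.
  by rewrite subnn Hqb0 HfN.
have Hstep : forall k, exists v, List.In (P k, al k, v, P k.+1) (pa_Delta A) /\ (k < i -> v = vs' k).
  move=> k; case: (ltnP k N) => Hk.
    rewrite !HP //; last by lia.
    rewrite Hal -/N Hk.
    case/Af_inv: (Htr' k Hk) => [[_ _ H]|[_ _ _ H]|[E _ _ [v H]]].
    - by exists (vs' k).
    - by exists (vs' k).
    - exists v; split=> // Hki; have := Hmin k; rewrite E => /(_ isT); lia.
  have [v Hv] := Hqb (k - N).
  exists v; split; last by lia.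
  rewrite /P ltnNge Hk /= ltnNge (leqW Hk) /= Hal -/N ltnNge Hk /=.
  by rewrite subSn.
have [vs Hvs] := fchoice Hstep.
exists P, vs; split; [|split; [|split]].
- have HN0 : 0 < N by lia.
  by rewrite HP // H0.
- by move=> k; case: (Hvs k).
- exists i; split=> //; split.
    have Hi' : i.-1 < N by lia.
    rewrite HP //.
    move: (Htr' _ Hi'); rewrite prednK // => /Af_inv [[_ E _]|[_ _ HF _]|[E _ _ _]].
    + by rewrite Hi in E.
    + done.
    + by have := Hmin _ (introT idP E) ; lia.
  rewrite -(@vsum_cut d vs vs' i N) //.
  by move=> k Hk; case: (Hvs k) => _ ->.
- move=> m; set b := blk st m.
  have Hb := blk_spec st0 stS m; rewrite -/b in Hb.
  exists (N + st b.+1); split; first by lia.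
  rewrite /P ltnNge leq_addr /= addKn /qb (blk_uniq st0 stS (m := st b.+1) (k := b.+1)).
    by rewrite subnn; case: (HR b.+1) => ->.
  by rewrite leqnn stS.
Qed.
End Auto.

Theorem lemma8 (Sigma : finType) (L : (nat -> Sigma) -> Prop) :
  RPBA_recognizable L ->
  exists (n : nat) (U V : 'I_n -> seq Sigma -> Prop),
    (forall i, Parikh_recognizable (U i)) /\
    (forall i, regular (V i)) /\
    (forall alpha, L alpha <-> exists i, concat_lang (U i) (omega_lang (V i)) alpha).
Proof.
case=> d [A HL].
exists #|pa_Q A|, (fun i => PA_accepts (@Af Sigma d A (enum_val i))),
  (fun i w => DFA_accepts (@Df Sigma d A (enum_val i)) w).
split; [|split].
- by move=> i; exists d, (@Af Sigma d A (enum_val i)).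
- by move=> i; exists (@Df Sigma d A (enum_val i)).
- move=> al; rewrite HL; split.
    case/dir1 => f H; exists (enum_rank f); by rewrite enum_rankK.
  by case=> i /dir2.
Qed.
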